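(* Let $X$ be a topological space in which every open set is a union of countably many clopen sets. The following are equivalent: (1) every Borel image of $X$ in $\mathbb{N}^{\mathbb{N}}$ is bounded; (2) $C_p(X)$ is an $\alpha_1$ space; (3) $B_p(X)$ is an $\alpha_1$ space; (4) $B_p(X)$ is an $\alpha_2$ space; (5) $B_p(X)$ is an $\alpha_3$ space; (6) $B_p(X)$ is an $\alpha_4$ space.
   Context: $C_p(X)$ (resp. $B_p(X)$) is the space of continuous (resp. Borel) real-valued functions on $X$ with the topology of pointwise convergence. A countable set $A$ of distinct points converges to $y$ if some (every) bijective enumeration of it does. For a space $Y$, a point $y$, and any sequence $A_1,A_2,\dots$ of countably infinite sets each converging to $y$: $Y$ is $\alpha_1$ if always there are cofinite $B_n\subseteq A_n$ with $\bigcup_nB_n$ converging to $y$; $\alpha_2$ if always there are $a_n\in A_n$ such that $\{a_n:n\in\mathbb{N}\}$ is infinite and converges to $y$ (i.e., $\mathsf{S}_1(\Gamma_y,\Gamma_y)$); $\alpha_3$ if always there is a countably infinite $B$ converging to $y$ such that $B\cap A_n$ is infinite for infinitely many $n$; $\alpha_4$ if always there is a countably infinite $B$ converging to $y$ such that $B\cap A_n\neq\emptyset$ for infinitely many $n$. $Y\subseteq\mathbb{N}^{\mathbb{N}}$ is bounded if some $g\in\mathbb{N}^{\mathbb{N}}$ satisfies $f(n)\le g(n)$ for all but finitely many $n$, for each $f\in Y$. A Borel image of $X$ is $\Psi[X]$ for a Borel measurable $\Psi$. *)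

(* Defs.v *)
From Stdlib Require Import Reals List.
Open Scope R_scope.

Definition is_topology {X : Type} (T : (X -> Prop) -> Prop) : Prop :=
  T (fun _ => True) /\
  T (fun _ => False) /\
  (forall U V, T U -> T V -> T (fun x => U x /\ V x)) /\
  (forall F : (X -> Prop) -> Prop, (forall U, F U -> T U) ->
      T (fun x => exists U, F U /\ U x)).

Definition is_closed {X : Type} (T : (X -> Prop) -> Prop) (C : X -> Prop) : Prop :=
  T (fun x => ~ C x).

Definition is_clopen {X : Type} (T : (X -> Prop) -> Prop) (C : X -> Prop) : Prop :=
  T C /\ is_closed T C.

Definition open_countable_union_clopen {X : Type} (T : (X -> Prop) -> Prop) : Prop :=
  forall U, T U -> exists C : nat -> (X -> Prop),
    (forall n, is_clopen T (C n)) /\ (forall x, U x <-> exists n, C n x).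

Definition is_sigma_algebra {X : Type} (S : (X -> Prop) -> Prop) : Prop :=
  S (fun _ => True) /\
  (forall A, S A -> S (fun x => ~ A x)) /\
  (forall A : nat -> (X -> Prop), (forall n, S (A n)) -> S (fun x => exists n, A n x)).

Definition borel {X : Type} (T : (X -> Prop) -> Prop) (A : X -> Prop) : Prop :=
  forall S, is_sigma_algebra S -> (forall U, T U -> S U) -> S A.

Definition borel_measurable {X Y : Type} (TX : (X -> Prop) -> Prop)
  (TY : (Y -> Prop) -> Prop) (f : X -> Y) : Prop :=
  forall V, TY V -> borel TX (fun x => V (f x)).

Definition continuous_map {X Y : Type} (TX : (X -> Prop) -> Prop)
  (TY : (Y -> Prop) -> Prop) (f : X -> Y) : Prop :=
  forall V, TY V -> TX (fun x => V (f x)).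

Definition R_open (U : R -> Prop) : Prop :=
  forall x, U x -> exists eps, eps > 0 /\ forall y, Rabs (y - x) < eps -> U y.

Definition baire_open (U : (nat -> nat) -> Prop) : Prop :=
  forall f, U f -> exists n, forall g, (forall k, (k < n)%nat -> g k = f k) -> U g.

Definition pw_open {X : Type} (U : (X -> R) -> Prop) : Prop :=
  forall f, U f -> exists (xs : list X) (eps : R), eps > 0 /\
    forall g, (forall x, In x xs -> Rabs (g x - f x) < eps) -> U g.

Definition pw_sub_open {X : Type} (P : (X -> R) -> Prop)
  (W : {f : X -> R | P f} -> Prop) : Prop :=
  exists U, pw_open U /\ forall g, W g <-> U (proj1_sig g).

Definition Cp_carrier {X : Type} (TX : (X -> Prop) -> Prop) : Type :=
  {f : X -> R | continuous_map TX R_open f}.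
Definition Cp_open {X : Type} (TX : (X -> Prop) -> Prop) :
  (Cp_carrier TX -> Prop) -> Prop :=
  pw_sub_open (fun f => continuous_map TX R_open f).

Definition Bp_carrier {X : Type} (TX : (X -> Prop) -> Prop) : Type :=
  {f : X -> R | borel_measurable TX R_open f}.
Definition Bp_open {X : Type} (TX : (X -> Prop) -> Prop) :
  (Bp_carrier TX -> Prop) -> Prop :=
  pw_sub_open (fun f => borel_measurable TX R_open f).

Definition seq_conv {Y : Type} (T : (Y -> Prop) -> Prop) (s : nat -> Y) (y : Y) : Prop :=
  forall U, T U -> U y -> exists N, forall n, (N <= n)%nat -> U (s n).

(** A countable set of distinct points converges to y if some bijective
    enumeration of it converges to y (this forces the set to be countably infinite). *)
Definition set_conv {Y : Type} (T : (Y -> Prop) -> Prop) (A : Y -> Prop) (y : Y) : Prop :=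
  exists e : nat -> Y,
    (forall m n, e m = e n -> m = n) /\
    (forall z, A z <-> exists n, e n = z) /\
    seq_conv T e y.

Definition finite_set {Y : Type} (A : Y -> Prop) : Prop :=
  exists l : list Y, forall z, A z -> In z l.

Definition infinite_set {Y : Type} (A : Y -> Prop) : Prop := ~ finite_set A.

Definition alpha1 {Y : Type} (T : (Y -> Prop) -> Prop) : Prop :=
  forall (y : Y) (A : nat -> (Y -> Prop)), (forall n, set_conv T (A n) y) ->
    exists B : nat -> (Y -> Prop),
      (forall n z, B n z -> A n z) /\
      (forall n, finite_set (fun z => A n z /\ ~ B n z)) /\
      set_conv T (fun z => exists n, B n z) y.

Definition alpha2 {Y : Type} (T : (Y -> Prop) -> Prop) : Prop :=
  forall (y : Y) (A : nat -> (Y -> Prop)), (forall n, set_conv T (A n) y) ->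
    exists a : nat -> Y,
      (forall n, A n (a n)) /\
      infinite_set (fun z => exists n, a n = z) /\
      set_conv T (fun z => exists n, a n = z) y.

Definition alpha3 {Y : Type} (T : (Y -> Prop) -> Prop) : Prop :=
  forall (y : Y) (A : nat -> (Y -> Prop)), (forall n, set_conv T (A n) y) ->
    exists B : Y -> Prop,
      set_conv T B y /\
      forall N, exists n, (N <= n)%nat /\ infinite_set (fun z => B z /\ A n z).

Definition alpha4 {Y : Type} (T : (Y -> Prop) -> Prop) : Prop :=
  forall (y : Y) (A : nat -> (Y -> Prop)), (forall n, set_conv T (A n) y) ->
    exists B : Y -> Prop,
      set_conv T B y /\
      forall N, exists n, (N <= n)%nat /\ exists z, B z /\ A n z.

Definition bounded_baire (Y : (nat -> nat) -> Prop) : Prop :=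
  exists g : nat -> nat, forall f, Y f -> exists N, forall n, (N <= n)%nat -> (f n <= g n)%nat.

Definition borel_images_bounded {X : Type} (TX : (X -> Prop) -> Prop) : Prop :=
  forall Psi : X -> (nat -> nat), borel_measurable TX baire_open Psi ->
    bounded_baire (fun f => exists x, Psi x = f).

(* Main.v *)
Require Import Defs.
From Stdlib Require Import Reals List.
From Stdlib Require Import ZArith Lra Lia Classical ClassicalEpsilon FunctionalExtensionality PropExtensionality Cantor FinFun Wf_nat Compare_dec.
Open Scope R_scope.

Lemma pred_ext {X : Type} (P : (X->Prop)->Prop) (U V : X -> Prop) :
  (forall x, U x <-> V x) -> P U -> P V.
Proof.
  intros H HU. replace V with U; auto.
  apply functional_extensionality; intro x; apply propositional_extensionality; auto.
Qed.

Lemma least_nat (P : nat -> Prop) : (exists n, P n) -> exists n, P n /\ forall m, P m -> (n <= m)%nat.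
Proof.
  intros [n Hn]. revert Hn. induction n as [n IH] using (well_founded_induction lt_wf).
  intro Hn. destruct (classic (exists m, (m < n)%nat /\ P m)) as [[m [Hm Pm]]|H].
  - exact (IH m Hm Pm).
  - exists n; split; auto. intros m Pm. destruct (le_lt_dec n m); auto. exfalso; apply H; eauto.
Qed.

Lemma finite_incl {Y} (A B : Y -> Prop) : (forall z, A z -> B z) -> finite_set B -> finite_set A.
Proof. intros H [l Hl]. exists l. auto. Qed.

Lemma finite_union {Y} (A B : Y -> Prop) : finite_set A -> finite_set B ->
  finite_set (fun z => A z \/ B z).
Proof. intros [l1 H1] [l2 H2]. exists (l1 ++ l2). intros z [H|H]; apply in_or_app; auto. Qed.

Lemma finite_range {Y} (e : nat -> Y) (N : nat) :
  finite_set (fun z => exists k, (k < N)%nat /\ e k = z).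
Proof.
  exists (map e (seq 0 N)). intros z [k [Hk <-]]. apply in_map. apply in_seq. lia.
Qed.

Lemma finite_bunion {Y} (A : nat -> Y -> Prop) (N : nat) :
  (forall n, (n < N)%nat -> finite_set (A n)) ->
  finite_set (fun z => exists n, (n < N)%nat /\ A n z).
Proof.
  induction N; intros H.
  - exists nil. intros z [n [Hn _]]. lia.
  - apply finite_incl with (B := fun z => (exists n, (n < N)%nat /\ A n z) \/ A N z).
    + intros z [n [Hn Hz]]. destruct (Nat.eq_dec n N); [subst; right; auto| left; exists n; split; auto; lia].
    + apply finite_union; auto.
Qed.

Lemma inj_infinite {Y} (SS : Y -> Prop) (e : nat -> Y) :
  (forall m n, e m = e n -> m = n) -> (forall k, SS (e k)) -> infinite_set SS.
Proof.
  intros Hi HS [l Hl].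
  assert (Hnd : NoDup (map e (seq 0 (S (length l))))).
  { apply Injective_map_NoDup. intros a b; apply Hi. apply seq_NoDup. }
  assert (Hinc : incl (map e (seq 0 (S (length l)))) l).
  { intros z Hz. apply in_map_iff in Hz. destruct Hz as [k [<- _]]. auto. }
  pose proof (NoDup_incl_length Hnd Hinc). rewrite length_map, length_seq in H. lia.
Qed.

Lemma index_bound {Y} (e : nat -> Y) (l : list Y) :
  (forall m n, e m = e n -> m = n) -> exists N, forall k, In (e k) l -> (k < N)%nat.
Proof.
  intros Hi. induction l as [|a l IH].
  - exists 0%nat. intros k [].
  - destruct IH as [N HN]. destruct (classic (exists k, e k = a)) as [[k0 Hk0]|Hn].
    + exists (Nat.max N (S k0)). intros k [H|H].
      * subst a. apply Hi in H. lia.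
      * specialize (HN k H). lia.
    + exists N. intros k [H|H]; [exfalso; eauto | auto].
Qed.

Lemma list_uniform {A : Type} (xs : list A) (R : A -> nat -> Prop) :
  (forall x, In x xs -> exists N, forall n, (N <= n)%nat -> R x n) ->
  exists N, forall x, In x xs -> forall n, (N <= n)%nat -> R x n.
Proof.
  induction xs as [|a xs IH]; intros H.
  - exists 0%nat. intros x [].
  - destruct (H a (or_introl eq_refl)) as [N1 H1].
    destruct IH as [N2 H2]. { intros x Hx; apply H; right; auto. }
    exists (Nat.max N1 N2). intros x [<-|Hx] n Hn; [apply H1|apply H2; auto]; lia.
Qed.

Lemma nat_uniform (N : nat) (R : nat -> nat -> Prop) :
  (forall i, (i < N)%nat -> exists M, forall n, (M <= n)%nat -> R i n) ->
  exists M, forall i, (i < N)%nat -> forall n, (M <= n)%nat -> R i n.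
Proof.
  intros H. destruct (list_uniform (seq 0 N) R) as [M HM].
  - intros x Hx. apply in_seq in Hx. apply H. lia.
  - exists M. intros i Hi. apply HM. apply in_seq. lia.
Qed.

Section Conv.
Context {Y : Type} (T : (Y -> Prop) -> Prop).

Lemma conv_fin (A : Y -> Prop) y : set_conv T A y ->
  forall U, T U -> U y -> finite_set (fun z => A z /\ ~ U z).
Proof.
  intros [e [Hi [Hr Hc]]] U HU Uy. destruct (Hc U HU Uy) as [N HN].
  apply finite_incl with (B := fun z => exists k, (k < N)%nat /\ e k = z); [|apply finite_range].
  intros z [Az nU]. apply Hr in Az. destruct Az as [k <-]. exists k. split; auto.
  destruct (le_lt_dec N k); auto. exfalso. apply nU, HN; auto.
Qed.

Lemma conv_inf (A : Y -> Prop) y : set_conv T A y -> infinite_set A.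
Proof.
  intros [e [Hi [Hr Hc]]]. apply (inj_infinite A e Hi). intros k. apply Hr. eauto.
Qed.

Lemma conv_crit (A : Y -> Prop) y :
  (exists u : nat -> Y, forall z, A z -> exists n, u n = z) -> infinite_set A ->
  (forall U, T U -> U y -> finite_set (fun z => A z /\ ~ U z)) -> set_conv T A y.
Proof.
  intros [u Hu] Hinf Hbad.
  set (I := fun n => A (u n) /\ forall m, (m < n)%nat -> u m <> u n).
  assert (F1 : forall z, A z -> exists n, I n /\ u n = z).
  { intros z Hz. destruct (least_nat (fun n => u n = z) (Hu z Hz)) as [n [Hn Hmin]].
    exists n. split; auto. split. rewrite Hn; auto. intros m Hm E. rewrite Hn in E.
    apply Hmin in E. lia. }
  assert (F2 : forall N, exists n, (N <= n)%nat /\ I n).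
  { intros N. apply NNPP. intro Hc. apply Hinf.
    apply finite_incl with (B := fun z => exists k, (k < N)%nat /\ u k = z); [|apply finite_range].
    intros z Hz. destruct (F1 z Hz) as [n [In Hn]]. exists n. split; auto.
    destruct (le_lt_dec N n); auto. exfalso; apply Hc; eauto. }
  assert (F3 : forall p, exists n, ((p <= n)%nat /\ I n) /\ forall m, ((p <= m)%nat /\ I m) -> (n <= m)%nat).
  { intros p. apply least_nat. apply F2. }
  destruct (ClassicalEpsilon.choice _ F3) as [nxt Hnxt].
  set (idx := fix idx (k : nat) : nat := match k with O => nxt O | S k => nxt (S (idx k)) end).
  assert (HI : forall k, I (idx k)).
  { intros [|k]; simpl; apply (Hnxt _). }
  assert (Hlt : forall k, (idx k < idx (S k))%nat).
  { intros k. simpl. destruct (Hnxt (S (idx k))) as [[H1 _] _]. lia. }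
  assert (Hmono : forall k d, (idx k < idx (S d + k))%nat).
  { intros k d. induction d. simpl plus. apply Hlt. eapply Nat.lt_trans; [apply IHd|]. apply Hlt. }
  assert (Hinj : forall m n, u (idx m) = u (idx n) -> m = n).
  { intros m n E. destruct (Nat.lt_trichotomy m n) as [H|[H|H]]; auto; exfalso.
    - destruct (HI n) as [_ Hn]. replace n with (S (n - m - 1) + m)%nat in * by lia.
      apply (Hn (idx m)); auto.
    - destruct (HI m) as [_ Hm]. replace m with (S (m - n - 1) + n)%nat in * by lia.
      apply (Hm (idx n)); auto. }
  exists (fun k => u (idx k)). split; [exact Hinj|split].
  - intros z; split.
    + intros Hz. destruct (F1 z Hz) as [n [In <-]].
      assert (H0 : (idx 0 <= n)%nat).
      { simpl. destruct (Hnxt 0%nat) as [_ Hm]. apply Hm. split; auto; lia. }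
      assert (Hd : forall d k, (n - idx k <= d)%nat -> (idx k <= n)%nat -> exists k', idx k' = n).
      { induction d; intros k Hk1 Hk2.
        - exists k; lia.
        - destruct (Nat.eq_dec (idx k) n) as [E|E]; [exists k; auto|].
          apply (IHd (S k)).
          + pose proof (Hlt k). lia.
          + simpl. destruct (Hnxt (S (idx k))) as [_ Hm]. apply Hm. split; auto; lia. }
      destruct (Hd n 0%nat) as [k' Hk']; [lia|auto|]. exists k'. rewrite Hk'; auto.
    + intros [k <-]. apply (HI k).
  - intros U HU Uy. destruct (Hbad U HU Uy) as [l Hl].
    destruct (index_bound (fun k => u (idx k)) l Hinj) as [N HN].
    exists N. intros n Hn. apply NNPP. intro nU. specialize (HN n (Hl _ (conj (proj1 (HI n)) nU))). lia.
Qed.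

End Conv.

Section Borel.
Context {X : Type} (TX : (X -> Prop) -> Prop).

Lemma borel_open U : TX U -> borel TX U.
Proof. intros HU S _ HS. auto. Qed.

Lemma borel_true : borel TX (fun _ => True).
Proof. intros S [H _] _. auto. Qed.

Lemma borel_compl A : borel TX A -> borel TX (fun x => ~ A x).
Proof. intros HA S HS HO. pose proof HS as [_ [H _]]. apply H, HA; auto. Qed.

Lemma borel_cunion (A : nat -> X -> Prop) : (forall n, borel TX (A n)) ->
  borel TX (fun x => exists n, A n x).
Proof. intros HA S HS HO. pose proof HS as [_ [_ H]]. apply H. intros n. apply HA; auto. Qed.

Lemma borel_false : borel TX (fun _ => False).
Proof.
  apply (pred_ext _ (fun x => ~ True)); [tauto|]. apply borel_compl, borel_true.
Qed.

Lemma borel_union2 A B : borel TX A -> borel TX B -> borel TX (fun x => A x \/ B x).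
Proof.
  intros HA HB. apply (pred_ext _ (fun x => exists n, (if Nat.eqb n 0 then A else B) x)).
  - intros x; split. intros [[|n] H]; simpl in H; auto. intros [H|H]; [exists 0%nat|exists 1%nat]; auto.
  - apply borel_cunion. intros [|n]; simpl; auto.
Qed.

Lemma borel_cinter (A : nat -> X -> Prop) : (forall n, borel TX (A n)) ->
  borel TX (fun x => forall n, A n x).
Proof.
  intros HA. apply (pred_ext _ (fun x => ~ exists n, ~ A n x)).
  - intros x; split. intros H n. apply NNPP; intro; eauto. intros H [n Hn]; eauto.
  - apply borel_compl, borel_cunion. intros; apply borel_compl; auto.
Qed.

Lemma borel_inter2 A B : borel TX A -> borel TX B -> borel TX (fun x => A x /\ B x).
Proof.
  intros HA HB. apply (pred_ext _ (fun x => ~ (~ A x \/ ~ B x))); [intros; tauto|].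
  apply borel_compl, borel_union2; apply borel_compl; auto.
Qed.

Lemma borel_const (p : Prop) : borel TX (fun _ => p).
Proof.
  destruct (classic p).
  - apply (pred_ext _ (fun _ => True)); [intros; tauto|]. apply borel_true.
  - apply (pred_ext _ (fun _ => False)); [intros; tauto|]. apply borel_false.
Qed.

Lemma borel_imp (p : Prop) B : borel TX B -> borel TX (fun x => p -> B x).
Proof.
  intros HB. destruct (classic p).
  - apply (pred_ext _ B); [intros; tauto|auto].
  - apply (pred_ext _ (fun _ => True)); [intros; tauto|]. apply borel_true.
Qed.

Lemma R_open_ball c d : R_open (fun r => Rabs (r - c) < d).
Proof.
  intros x Hx. exists (d - Rabs (x - c)). split; [lra|]. intros y Hy.
  pose proof (Rabs_triang (y - x) (x - c)). replace (y - x + (x - c)) with (y - c) in H by ring. lra.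
Qed.

Lemma borel_ball (f : X -> R) c d : borel_measurable TX R_open f ->
  borel TX (fun x => Rabs (f x - c) < d).
Proof. intros Hf. apply (Hf (fun r => Rabs (r - c) < d)), R_open_ball. Qed.

Lemma borel_dist (f g : X -> R) d : borel_measurable TX R_open f -> borel_measurable TX R_open g ->
  borel TX (fun x => Rabs (f x - g x) < d).
Proof.
  intros Hf Hg.
  set (W := fun (j : nat) (z : Z) (x : X) =>
    Rabs (f x - IZR z / INR (S j)) < / INR (S j) /\ Rabs (g x - IZR z / INR (S j)) < d - 2 / INR (S j)).
  apply (pred_ext _ (fun x => exists j, exists n, W j (Z.of_nat n) x \/ W j (- Z.of_nat n)%Z x)).
  - intros x; split.
    + intros [j [n Hn]].
      assert (H : exists z, W j z x) by (destruct Hn; eauto). clear Hn. destruct H as [z [H1 H2]].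
      pose proof (Rabs_triang (f x - IZR z / INR (S j)) (IZR z / INR (S j) - g x)).
      replace (f x - IZR z / INR (S j) + (IZR z / INR (S j) - g x)) with (f x - g x) in H by ring.
      rewrite Rabs_minus_sym in H2. assert (0 < / INR (S j)). { apply Rinv_0_lt_compat, lt_0_INR; lia. }
      unfold Rdiv in H2. lra.
    + intros Hx.
      set (r := d - Rabs (f x - g x)).
      assert (Hr : 0 < r) by (unfold r; lra).
      destruct (archimed (3 / r)) as [Ha _].
      set (j := Z.to_nat (up (3 / r))).
      assert (Hj : 3 / r < INR (S j)).
      { unfold j. rewrite S_INR. rewrite INR_IZR_INZ.
        destruct (Z_lt_le_dec (up (3/r)) 0).
        - exfalso. assert (0 < 3 / r) by (apply Rdiv_lt_0_compat; lra).
          assert (H0 : 0 < IZR (up (3 / r))) by lra. apply lt_IZR in H0. lia.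
        - rewrite Z2Nat.id by lia. lra. }
      assert (HS : 0 < INR (S j)) by (apply lt_0_INR; lia).
      set (z := (up (f x * INR (S j)) - 1)%Z).
      assert (Hz1 : IZR z <= f x * INR (S j) < IZR z + 1).
      { unfold z. rewrite minus_IZR. destruct (archimed (f x * INR (S j))). lra. }
      assert (Hw : W j z x).
      { assert (E1 : f x - IZR z / INR (S j) = (f x * INR (S j) - IZR z) / INR (S j)) by (field; lra).
        assert (Hq : 3 / INR (S j) < r).
        { apply (Rmult_lt_reg_r (INR (S j))); auto. unfold Rdiv. rewrite Rmult_assoc, Rinv_l by lra.
          apply (Rmult_lt_reg_r (/ r)). apply Rinv_0_lt_compat; lra.
          replace (r * INR (S j) * / r) with (INR (S j)) by (field; lra). unfold Rdiv in Hj. lra. }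
        assert (Ha1 : Rabs (f x - IZR z / INR (S j)) < / INR (S j)).
        { rewrite E1. unfold Rdiv. rewrite Rabs_mult, (Rabs_right (/ INR (S j))).
          2: { left; apply Rinv_0_lt_compat; auto. }
          rewrite Rabs_right by lra. apply (Rmult_lt_reg_r (INR (S j))); auto.
          rewrite Rmult_assoc, Rinv_l by lra. lra. }
        split; auto.
        pose proof (Rabs_triang (g x - f x) (f x - IZR z / INR (S j))).
        replace (g x - f x + (f x - IZR z / INR (S j))) with (g x - IZR z / INR (S j)) in H by ring.
        rewrite (Rabs_minus_sym (g x) (f x)) in H. unfold r in Hq. unfold Rdiv in *. lra. }
      exists j. destruct (Z_le_gt_dec 0 z).
      * exists (Z.to_nat z). left. rewrite Z2Nat.id; auto.
      * exists (Z.to_nat (- z)). right. rewrite Z2Nat.id by lia. rewrite Z.opp_involutive; auto.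
  - apply borel_cunion; intro j. apply borel_cunion; intro n. apply borel_union2.
    + apply borel_inter2; apply borel_ball; auto.
    + apply borel_inter2; apply borel_ball; auto.
Qed.

Definition upd (g : nat -> nat) (n m : nat) : nat -> nat := fun k => if Nat.eqb k n then m else g k.

Lemma borel_dep (Psi : X -> nat -> nat) :
  (forall n m, borel TX (fun x => Psi x n = m)) ->
  forall n (Q : (nat -> nat) -> Prop),
  (forall g h, (forall k, (k < n)%nat -> g k = h k) -> Q g -> Q h) ->
  borel TX (fun x => Q (Psi x)).
Proof.
  intros Hc n. induction n; intros Q HQ.
  - apply (pred_ext _ (fun _ => Q (fun _ => 0%nat))).
    + intros x; split; apply HQ; intros; lia.
    + apply borel_const.
  - apply (pred_ext _ (fun x => exists m, Psi x n = m /\ Q (upd (Psi x) n m))).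
    + intros x; split.
      * intros [m [E H]]. revert H. apply HQ. intros k Hk. unfold upd.
        destruct (Nat.eqb_spec k n); subst; auto.
      * intros H. exists (Psi x n). split; auto. revert H. apply HQ. intros k Hk. unfold upd.
        destruct (Nat.eqb_spec k n); subst; auto.
    + apply borel_cunion. intros m. apply borel_inter2; auto.
      apply (IHn (fun g => Q (upd g n m))). intros g h Hgh. apply HQ. intros k Hk. unfold upd.
      destruct (Nat.eqb_spec k n); auto. apply Hgh. lia.
Qed.

Lemma baire_meas (Psi : X -> nat -> nat) :
  (forall n m, borel TX (fun x => Psi x n = m)) -> borel_measurable TX baire_open Psi.
Proof.
  intros Hc V HV.
  apply (pred_ext _ (fun x => exists n, forall g, (forall k, (k < n)%nat -> g k = Psi x k) -> V g)).
  - intros x; split.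
    + intros [n Hn]. apply Hn. auto.
    + intros Hx. apply HV; auto.
  - apply borel_cunion. intros n.
    apply (borel_dep Psi Hc n (fun h => forall g, (forall k, (k < n)%nat -> g k = h k) -> V g)).
    intros h h' Hhh' H g Hg. apply H. intros k Hk. rewrite Hg; auto. symmetry; auto.
Qed.

Lemma baire_pre (Psi : X -> nat -> nat) (W : (nat -> nat) -> Prop) :
  borel_measurable TX baire_open Psi -> baire_open W -> borel TX (fun x => W (Psi x)).
Proof. intros H HW. apply H, HW. Qed.

End Borel.

Lemma small_inv eps : eps > 0 -> exists n0, forall m, (n0 <= m)%nat -> / (INR m + 1) < eps.
Proof.
  intros He. destruct (INR_archimed eps 1 He) as [n0 Hn0]. exists n0. intros m Hm.
  apply le_INR in Hm. pose proof (pos_INR m).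
  apply (Rmult_lt_reg_l (INR m + 1)); [lra|]. rewrite Rinv_r by lra. nra.
Qed.

Lemma inv2_le m : / (INR m + 2) <= / (INR m + 1).
Proof. pose proof (pos_INR m). apply Rinv_le_contravar; lra. Qed.

Section FS.
Context {X : Type} (P : (X -> R) -> Prop).
Notation C := {f : X -> R | P f}.

Lemma nbhd_open (f0 : X -> R) x eps :
  pw_sub_open P (fun g : C => Rabs (proj1_sig g x - f0 x) < eps).
Proof.
  exists (fun h => Rabs (h x - f0 x) < eps). split; [|intros; tauto].
  intros h Hh. exists (x :: nil), (eps - Rabs (h x - f0 x)). split; [lra|].
  intros g Hg. specialize (Hg x (or_introl eq_refl)).
  pose proof (Rabs_triang (g x - h x) (h x - f0 x)).
  replace (g x - h x + (h x - f0 x)) with (g x - f0 x) in H by ring. lra.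
Qed.

Lemma seq_pw (e : nat -> C) (y : C) : seq_conv (pw_sub_open P) e y ->
  forall x eps, eps > 0 -> exists N, forall n, (N <= n)%nat -> Rabs (proj1_sig (e n) x - proj1_sig y x) < eps.
Proof.
  intros Hc x eps He. apply (Hc _ (nbhd_open (proj1_sig y) x eps)). rewrite Rminus_diag, Rabs_R0; auto.
Qed.

Lemma open_ball (U : C -> Prop) (y : C) : pw_sub_open P U -> U y ->
  exists xs eps, eps > 0 /\ forall g : C, (forall x, In x xs -> Rabs (proj1_sig g x - proj1_sig y x) < eps) -> U g.
Proof.
  intros [U' [HU' Hiff]] Uy. apply Hiff in Uy. destruct (HU' _ Uy) as [xs [eps [He H]]].
  exists xs, eps. split; auto. intros g Hg. apply Hiff. auto.
Qed.

End FS.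

Lemma bounded_alpha1 {X} (TX : (X->Prop)->Prop) (P : (X->R)->Prop)
  (HP : forall f, P f -> borel_measurable TX R_open f) :
  borel_images_bounded TX -> alpha1 (pw_sub_open P).
Proof.
  intros Hb y A HA.
  set (f := proj1_sig y).
  destruct (ClassicalEpsilon.choice _ HA) as [e He].
  set (Q := fun n x m => forall k, (m <= k)%nat -> Rabs (proj1_sig (e n k) x - f x) < / (INR n + 1)).
  assert (HQm : forall n x m m', (m <= m')%nat -> Q n x m -> Q n x m').
  { intros n x m m' H HQ k Hk. apply HQ. lia. }
  assert (HQe : forall n x, exists m, Q n x m).
  { intros n x. destruct (He n) as [_ [_ Hc]].
    destruct (seq_pw P (e n) y Hc x (/ (INR n + 1))) as [N HN].
    { apply Rinv_0_lt_compat. pose proof (pos_INR n). lra. }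
    exists N. intros k Hk. apply HN; auto. }
  assert (HPsi : forall x, exists g : nat -> nat, forall n, Q n x (g n) /\ forall m, Q n x m -> (g n <= m)%nat).
  { intros x. apply (ClassicalEpsilon.choice (fun n m => Q n x m /\ forall m', Q n x m' -> (m <= m')%nat)).
    intros n. apply least_nat. auto. }
  destruct (ClassicalEpsilon.choice _ HPsi) as [Psi HPs].
  assert (HQb : forall n m, borel TX (fun x => Q n x m)).
  { intros n m. apply borel_cinter. intros k. apply borel_imp. apply borel_dist; apply HP, proj2_sig. }
  assert (Hcoord : forall n m, borel TX (fun x => Psi x n = m)).
  { intros n m. apply (pred_ext _ (fun x => Q n x m /\ (m = 0%nat \/ ~ Q n x (m - 1)%nat))).
    - intros x. destruct (HPs x n) as [H1 H2]. split.
      + intros [Hq Hm]. apply Nat.le_antisymm; [apply H2; auto|].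
        destruct Hm as [->|Hm]; [lia|]. destruct (le_lt_dec m (Psi x n)); auto.
        exfalso. apply Hm. apply (HQm n x (Psi x n)); auto. lia.
      + intros <-. split; auto. destruct (Psi x n) as [|p] eqn:E; [left; auto|right].
        intros Hq. apply H2 in Hq. lia.
    - apply borel_inter2; [apply HQb|]. apply borel_union2; [apply borel_const|apply borel_compl, HQb]. }
  destruct (Hb Psi (baire_meas TX Psi Hcoord)) as [h Hh].
  assert (Hh' : forall x, exists N, forall n, (N <= n)%nat -> (Psi x n <= h n)%nat).
  { intros x. apply Hh. eauto. }
  exists (fun n z => exists k, (h n <= k)%nat /\ e n k = z). split; [|split].
  - intros n z [k [_ <-]]. destruct (He n) as [_ [Hr _]]. apply Hr. eauto.
  - intros n. apply finite_incl with (B := fun z => exists k, (k < h n)%nat /\ e n k = z); [|apply finite_range].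
    intros z [Az nB]. destruct (He n) as [_ [Hr _]]. apply Hr in Az. destruct Az as [k <-].
    exists k. split; auto. destruct (le_lt_dec (h n) k); auto. exfalso; apply nB; eauto.
  - apply conv_crit.
    + exists (fun m => e (fst (of_nat m)) (snd (of_nat m))).
      intros z [n [k [_ <-]]]. exists (to_nat (n, k)). rewrite cancel_of_to. reflexivity.
    + apply (inj_infinite _ (fun k => e 0%nat (h 0%nat + k)%nat)).
      * intros m n E. destruct (He 0%nat) as [Hi _]. apply Hi in E. lia.
      * intros k. exists 0%nat, (h 0%nat + k)%nat. split; auto; lia.
    + intros U HU Uy. destruct (open_ball P U y HU Uy) as [xs [eps [Heps Hball]]].
      destruct (list_uniform xs (fun x n => (Psi x n <= h n)%nat)) as [N1 HN1].
      { intros x _. apply Hh'. }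
      destruct (small_inv eps Heps) as [n0 Hn0].
      apply finite_incl with (B := fun z => exists n, (n < Nat.max N1 n0)%nat /\ (A n z /\ ~ U z)).
      * intros z [[n [k [Hk <-]]] nU]. exists n. split.
        -- destruct (le_lt_dec (Nat.max N1 n0) n); auto. exfalso. apply nU, Hball.
           intros x Hx. destruct (HPs x n) as [Hq _]. eapply Rlt_trans.
           ++ apply Hq. specialize (HN1 x Hx n ltac:(lia)). lia.
           ++ apply Hn0. lia.
        -- split; auto. destruct (He n) as [_ [Hr _]]. apply Hr. eauto.
      * apply finite_bunion. intros n _. apply (conv_fin (pw_sub_open P) _ y); auto.
Qed.

Section Alphas.
Context {Y : Type} (T : (Y -> Prop) -> Prop).

Lemma cof_infinite (A B : Y -> Prop) y : set_conv T A y -> (forall z, B z -> A z) ->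
  finite_set (fun z => A z /\ ~ B z) -> infinite_set B.
Proof.
  intros HA HBA [l' Hl'] [l Hl]. apply (conv_inf T A y HA). exists (l ++ l').
  intros z Az. apply in_or_app. destruct (classic (B z)); auto.
Qed.

Lemma a1_a3 : alpha1 T -> alpha3 T.
Proof.
  intros H1 y A HA. destruct (H1 y A HA) as [B [HBA [Hf Hc]]].
  exists (fun z => exists n, B n z). split; auto. intros N. exists N. split; auto.
  intros [l Hl]. apply (cof_infinite (A N) (B N) y (HA N) (HBA N) (Hf N)).
  exists l. intros z Bz. apply Hl. split; eauto.
Qed.

Lemma a3_a4 : alpha3 T -> alpha4 T.
Proof.
  intros H3 y A HA. destruct (H3 y A HA) as [B [Hc HB]]. exists B. split; auto.
  intros N. destruct (HB N) as [n [Hn Hi]]. exists n. split; auto.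
  apply NNPP. intro Hne. apply Hi. exists nil. intros z Hz. apply Hne; eauto.
Qed.

Lemma a2_a4 : alpha2 T -> alpha4 T.
Proof.
  intros H2 y A HA. destruct (H2 y A HA) as [a [Ha [_ Hc]]].
  exists (fun z => exists n, a n = z). split; auto. intros N. exists N. split; auto.
  exists (a N). split; eauto.
Qed.

Lemma a1_a2 : alpha1 T -> alpha2 T.
Proof.
  intros H1 y A HA. destruct (H1 y A HA) as [B [HBA [Hf Hc]]].
  pose proof Hc as [s [Hsi [Hsr Hsc]]].
  assert (Hex : forall np : nat * nat, exists j, (snd np <= j)%nat /\ B (fst np) (s j)).
  { intros [n p]. simpl. apply NNPP. intro Hn.
    apply (cof_infinite (A n) (B n) y (HA n) (HBA n) (Hf n)).
    apply finite_incl with (B := fun z => exists k, (k < p)%nat /\ s k = z); [|apply finite_range].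
    intros z Bz. assert (Hz : exists j, s j = z) by (apply Hsr; eauto). destruct Hz as [j <-].
    exists j. split; auto. destruct (le_lt_dec p j); auto. exfalso; eauto. }
  destruct (ClassicalEpsilon.choice _ Hex) as [pick Hpick].
  set (idx := fix idx (n : nat) : nat := match n with O => pick (0%nat, 0%nat) | S n => pick (S n, S (idx n)) end).
  assert (HB : forall n, B n (s (idx n))).
  { intros [|n]; simpl; apply (Hpick (_, _)). }
  assert (Hlt : forall n, (idx n < idx (S n))%nat).
  { intros n. simpl. apply (Hpick (S n, S (idx n))). }
  assert (Hmono : forall m d, (idx m < idx (S d + m))%nat).
  { intros m d. induction d. apply Hlt. eapply Nat.lt_trans; [apply IHd|]. apply Hlt. }
  assert (Hinj : forall m n, s (idx m) = s (idx n) -> m = n).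
  { intros m n E. apply Hsi in E. destruct (Nat.lt_trichotomy m n) as [H|[H|H]]; auto; exfalso.
    - replace n with (S (n - m - 1) + m)%nat in E by lia. specialize (Hmono m (n - m - 1)%nat). lia.
    - replace m with (S (m - n - 1) + n)%nat in E by lia. specialize (Hmono n (m - n - 1)%nat). lia. }
  exists (fun n => s (idx n)). split; [|split].
  - intros n. apply HBA, HB.
  - apply (inj_infinite _ (fun n => s (idx n)) Hinj). eauto.
  - apply conv_crit.
    + exists (fun n => s (idx n)). auto.
    + apply (inj_infinite _ (fun n => s (idx n)) Hinj). eauto.
    + intros U HU Uy. apply finite_incl with (B := fun z => (exists n, B n z) /\ ~ U z).
      * intros z [[n <-] nU]. split; eauto.
      * apply (conv_fin T _ y); auto.
Qed.

End Alphas.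

Definition indf {X : Type} (C : X -> Prop) (c : R) : X -> R :=
  fun x => (if excluded_middle_informative (C x) then 1 else 0) + c.
Definition cc (n k : nat) : R := / (INR (to_nat (n, k)) + 2).

Lemma cc_pos n k : 0 < cc n k <= / 2.
Proof.
  unfold cc. pose proof (pos_INR (to_nat (n, k))). split.
  - apply Rinv_0_lt_compat; lra.
  - apply Rinv_le_contravar; lra.
Qed.

Lemma cc_inj n k n' k' : cc n k = cc n' k' -> n = n' /\ k = k'.
Proof.
  unfold cc. intros E. pose proof (pos_INR (to_nat (n, k))). pose proof (pos_INR (to_nat (n', k'))).
  assert (E2 : INR (to_nat (n, k)) + 2 = INR (to_nat (n', k')) + 2).
  { rewrite <- (Rinv_inv (INR (to_nat (n, k)) + 2)), <- (Rinv_inv (INR (to_nat (n', k')) + 2)), E. reflexivity. }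
  assert (E3 : to_nat (n, k) = to_nat (n', k')) by (apply INR_eq; lra).
  apply (f_equal of_nat) in E3. rewrite !cancel_of_to in E3. inversion E3; auto.
Qed.

Lemma cc_small eps : eps > 0 -> exists k0, forall n k, (k0 <= k)%nat -> cc n k < eps.
Proof.
  intros He. destruct (small_inv eps He) as [k0 Hk]. exists k0. intros n k Hk0.
  eapply Rle_lt_trans; [apply inv2_le|]. apply Hk. pose proof (to_nat_non_decreasing n k). lia.
Qed.

Lemma ind_meas {X : Type} (Fam : (X -> Prop) -> Prop) (C : X -> Prop) c :
  Fam (fun _ => True) -> Fam (fun _ => False) -> Fam C -> Fam (fun x => ~ C x) ->
  forall V, Fam (fun x => V (indf C c x)).
Proof.
  intros H1 H2 H3 H4 V. unfold indf.
  destruct (classic (V (1 + c))) as [Va|Va]; destruct (classic (V (0 + c))) as [Vb|Vb].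
  - apply (pred_ext _ (fun _ => True)); auto. intros x; destruct excluded_middle_informative; tauto.
  - apply (pred_ext _ C); auto. intros x; destruct excluded_middle_informative; tauto.
  - apply (pred_ext _ (fun x => ~ C x)); auto. intros x; destruct excluded_middle_informative; tauto.
  - apply (pred_ext _ (fun _ => False)); auto. intros x; destruct excluded_middle_informative; tauto.
Qed.

Lemma ind_decode {X : Type} (C C' : X -> Prop) c c' x :
  0 < c <= /2 -> 0 < c' <= /2 -> indf C c x = indf C' c' x -> c = c'.
Proof.
  unfold indf. intros H1 H2. do 2 destruct excluded_middle_informative; lra.
Qed.

Lemma ind_val1 {X : Type} (C : X -> Prop) c x : C x -> indf C c x = 1 + c.
Proof. unfold indf. destruct excluded_middle_informative; tauto. Qed.
Lemma ind_val0 {X : Type} (C : X -> Prop) c x : ~ C x -> indf C c x = 0 + c.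
Proof. unfold indf. destruct excluded_middle_informative; tauto. Qed.

Section GenConv.
Context {X : Type} (P : (X -> R) -> Prop) (x0 : X) (P0 : P (fun _ => 0))
  (W : nat -> nat -> X -> Prop) (HW : forall n k, P (indf (W n k) (cc n k))).

Definition Fz : {f : X -> R | P f} := exist P (fun _ => 0) P0.
Definition FF n k : {f : X -> R | P f} := exist P (indf (W n k) (cc n k)) (HW n k).

Lemma FF_inj n k n' k' : FF n k = FF n' k' -> n = n' /\ k = k'.
Proof.
  intros E. apply (f_equal (fun g => proj1_sig g x0)) in E. simpl in E.
  apply cc_inj. eapply ind_decode; eauto; apply cc_pos.
Qed.

Lemma FF_conv n : (forall x, exists K, forall k, (K <= k)%nat -> ~ W n k x) ->
  set_conv (pw_sub_open P) (fun z => exists k, FF n k = z) Fz.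
Proof.
  intros Hev. exists (FF n). split; [|split].
  - intros a b E. apply FF_inj in E. tauto.
  - intros z; tauto.
  - intros U HU Uz. destruct (open_ball P U Fz HU Uz) as [xs [eps [He Hb]]].
    destruct (list_uniform xs (fun x k => ~ W n k x)) as [N HN]. { intros x _; apply Hev. }
    destruct (cc_small eps He) as [k0 Hk0].
    exists (Nat.max N k0). intros k Hk. apply Hb. intros x Hx. simpl.
    rewrite ind_val0 by (apply (HN x Hx); lia). pose proof (cc_pos n k). specialize (Hk0 n k ltac:(lia)).
    rewrite Rabs_right; lra.
Qed.

Lemma FF_bad (B : {f : X -> R | P f} -> Prop) : set_conv (pw_sub_open P) B Fz ->
  forall x, exists Mb, forall n k, B (FF n k) -> W n k x -> (to_nat (n, k) < Mb)%nat.
Proof.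
  intros Hc x.
  destruct (conv_fin _ B Fz Hc _ (nbhd_open P (fun _ => 0) x (/2))) as [L HL].
  { simpl. rewrite Rminus_diag, Rabs_R0. lra. }
  destruct (index_bound (fun m => FF (fst (of_nat m)) (snd (of_nat m))) L) as [Mb HMb].
  { intros a b E. apply FF_inj in E. destruct E as [E1 E2].
    rewrite <- (cancel_to_of a), <- (cancel_to_of b). destruct (of_nat a), (of_nat b). simpl in *; subst; auto. }
  exists Mb. intros n k Bz Wx. apply HMb. rewrite cancel_of_to. simpl. apply HL. split; auto.
  simpl. rewrite ind_val1 by auto. pose proof (cc_pos n k). rewrite Rminus_0_r, Rabs_right; lra.
Qed.

End GenConv.

Section Top.
Context {X : Type} (TX : (X -> Prop) -> Prop) (HT : is_topology TX).

Lemma open_true : TX (fun _ => True).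
Proof. apply HT. Qed.
Lemma open_false : TX (fun _ => False).
Proof. apply HT. Qed.
Lemma open_inter2 A B : TX A -> TX B -> TX (fun x => A x /\ B x).
Proof. apply HT. Qed.
Lemma open_union2 A B : TX A -> TX B -> TX (fun x => A x \/ B x).
Proof.
  intros HA HB. destruct HT as [_ [_ [_ H]]].
  apply (pred_ext _ (fun x => exists U, (U = A \/ U = B) /\ U x)).
  - intros x; split. intros [U [[E|E] HU]]; subst; auto. intros [H1|H1]; eauto.
  - apply H. intros U [E|E]; subst; auto.
Qed.

Lemma clopen_compl C : is_clopen TX C -> is_clopen TX (fun x => ~ C x).
Proof.
  intros [H1 H2]. split; auto. unfold is_closed. apply (pred_ext _ C); auto. intros; tauto.
Qed.
Lemma clopen_true : is_clopen TX (fun _ => True).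
Proof.
  split; [apply open_true|]. unfold is_closed. apply (pred_ext _ (fun _ => False)); [tauto|apply open_false].
Qed.
Lemma clopen_union2 A B : is_clopen TX A -> is_clopen TX B -> is_clopen TX (fun x => A x \/ B x).
Proof.
  intros [A1 A2] [B1 B2]. split; [apply open_union2; auto|]. unfold is_closed.
  apply (pred_ext _ (fun x => ~ A x /\ ~ B x)); [intros; tauto|]. apply open_inter2; auto.
Qed.
Lemma clopen_inter2 A B : is_clopen TX A -> is_clopen TX B -> is_clopen TX (fun x => A x /\ B x).
Proof.
  intros HA HB. apply (pred_ext _ (fun x => ~ (~ A x \/ ~ B x))); [intros; tauto|].
  apply clopen_compl, clopen_union2; apply clopen_compl; auto.
Qed.
Lemma clopen_symdiff A B : is_clopen TX A -> is_clopen TX B ->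
  is_clopen TX (fun x => (A x /\ ~ B x) \/ (~ A x /\ B x)).
Proof.
  intros HA HB. apply clopen_union2; apply clopen_inter2; auto; apply clopen_compl; auto.
Qed.
Lemma clopen_finunion (C : nat -> X -> Prop) : (forall n, is_clopen TX (C n)) ->
  forall m, is_clopen TX (fun x => exists n, (n <= m)%nat /\ C n x).
Proof.
  intros HC m. induction m.
  - apply (pred_ext _ (C 0%nat)); auto. intros x; split; eauto. intros [n [Hn H]].
    replace n with 0%nat in H by lia. auto.
  - apply (pred_ext _ (fun x => (exists n, (n <= m)%nat /\ C n x) \/ C (S m) x)).
    + intros x; split.
      * intros [[n [Hn H]]|H]; eauto.
      * intros [n [Hn H]]. destruct (Nat.eq_dec n (S m)); [subst; right; auto|left; exists n; split; auto; lia].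
    + apply clopen_union2; auto.
Qed.

Lemma cont_const (c : R) : continuous_map TX R_open (fun _ => c).
Proof.
  intros V _. destruct (classic (V c)).
  - apply (pred_ext _ (fun _ => True)); [tauto|apply open_true].
  - apply (pred_ext _ (fun _ => False)); [tauto|apply open_false].
Qed.

Lemma cont_ind C c : is_clopen TX C -> continuous_map TX R_open (indf C c).
Proof.
  intros [H1 H2] V _. apply ind_meas; auto; [apply open_true|apply open_false].
Qed.

Lemma lemmaG : alpha1 (pw_sub_open (fun f => continuous_map TX R_open f)) ->
  forall D : nat -> nat -> X -> Prop, (forall n k, is_clopen TX (D n k)) ->
  (forall n x, exists K, forall k, (K <= k)%nat -> ~ D n k x) ->
  exists h : nat -> nat, forall x, exists N, forall n k, (N <= n)%nat -> (h n <= k)%nat -> ~ D n k x.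
Proof.
  intros H1 D HD Hev.
  destruct (classic (inhabited X)) as [[x0]|Hne].
  2: { exists (fun _ => 0%nat). intros x. exfalso. apply Hne. constructor; auto. }
  set (P := fun f => continuous_map TX R_open f).
  assert (P0 : P (fun _ => 0)) by apply cont_const.
  assert (HW : forall n k, P (indf (D n k) (cc n k))) by (intros; apply cont_ind; auto).
  destruct (H1 (Fz P P0) (fun n z => exists k, FF P D HW n k = z)) as [B [HBA [Hfin Hc]]].
  { intros n. apply FF_conv; auto. }
  assert (Hh : forall n, exists H, forall k, (H <= k)%nat -> B n (FF P D HW n k)).
  { intros n. destruct (Hfin n) as [l Hl].
    destruct (index_bound (FF P D HW n) l) as [H HH].
    { intros a b E. apply (FF_inj P x0) in E. tauto. }
    exists H. intros k Hk. apply NNPP. intro nB. specialize (HH k (Hl _ (conj (ex_intro _ k eq_refl) nB))). lia. }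
  destruct (ClassicalEpsilon.choice _ Hh) as [h Hh'].
  exists h. intros x. destruct (FF_bad P x0 P0 D HW _ Hc x) as [Mb HMb].
  exists Mb. intros n k Hn Hk Dx. specialize (HMb n k (ex_intro _ n (Hh' n k Hk)) Dx).
  pose proof (to_nat_non_decreasing n k). lia.
Qed.

Definition lc (A : X -> Prop) : Prop :=
  exists C : nat -> X -> Prop, (forall m, is_clopen TX (C m)) /\
    forall x, (A x -> exists N, forall m, (N <= m)%nat -> C m x) /\
              (~ A x -> exists N, forall m, (N <= m)%nat -> ~ C m x).

Lemma lc_clopen A : is_clopen TX A -> lc A.
Proof. intros H. exists (fun _ => A). split; auto. intros x; split; intros; exists 0%nat; auto. Qed.

Lemma lc_sigma : alpha1 (pw_sub_open (fun f => continuous_map TX R_open f)) -> is_sigma_algebra lc.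
Proof.
  intros H1. split; [|split].
  - apply lc_clopen, clopen_true.
  - intros A [C [HC HA]]. exists (fun m x => ~ C m x). split; [intros; apply clopen_compl; auto|].
    intros x. destruct (HA x) as [Ha Hb]. split.
    + intros nA. destruct (Hb nA) as [N HN]. eauto.
    + intros nnA. destruct (Ha (NNPP _ nnA)) as [N HN]. exists N. intros m Hm nC. auto.
  - intros A HA. destruct (ClassicalEpsilon.choice _ HA) as [C HC].
    set (D := fun n m x => (C n m x /\ ~ C n (S m) x) \/ (~ C n m x /\ C n (S m) x)).
    destruct (lemmaG H1 D) as [h Hh].
    + intros n m. apply clopen_symdiff; apply HC.
    + intros n x. destruct (HC n) as [_ Hx]. destruct (Hx x) as [Ha Hb].
      destruct (classic (A n x)) as [An|An].
      * destruct (Ha An) as [N HN]. exists N. intros k Hk. unfold D. assert (C n (S k) x) by (apply HN; lia).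
        specialize (HN k Hk). tauto.
      * destruct (Hb An) as [N HN]. exists N. intros k Hk. unfold D. assert (~ C n (S k) x) by (apply HN; lia). 
        specialize (HN k Hk). tauto.
    + exists (fun m x => exists n, (n <= m)%nat /\ C n (Nat.max m (h n)) x). split.
      * intros m. apply (clopen_finunion (fun n => C n (Nat.max m (h n)))). intros n; apply HC.
      * intros x. split.
        -- intros [n An]. destruct (HC n) as [_ Hx]. destruct (proj1 (Hx x) An) as [N HN].
           exists (Nat.max n N). intros m Hm. exists n. split; [lia|]. apply HN. lia.
        -- intros nA. destruct (Hh x) as [N HN].
           assert (Hfalse : forall n, exists K, forall m, (K <= m)%nat -> ~ C n m x).
           { intros n. destruct (HC n) as [_ Hx]. apply (proj2 (Hx x)). intros An; apply nA; eauto. }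
           destruct (nat_uniform N (fun n m => ~ C n m x)) as [K HK]. { intros i _; apply Hfalse. }
           exists K. intros m Hm [n [Hnm Hc]].
           destruct (le_lt_dec N n) as [HnN|HnN].
           ++ assert (Hconst : forall t, C n (h n + t)%nat x <-> C n (h n) x).
              { induction t. rewrite Nat.add_0_r; tauto.
                rewrite Nat.add_succ_r. specialize (HN n (h n + t)%nat HnN ltac:(lia)). unfold D in HN. tauto. }
              destruct (Hfalse n) as [K' HK'].
              apply (HK' (h n + K')%nat); [lia|]. apply Hconst.
              replace (Nat.max m (h n)) with (h n + (Nat.max m (h n) - h n))%nat in Hc by lia.
              apply Hconst in Hc. auto.
           ++ apply (HK n HnN (Nat.max m (h n))); auto. lia.
Qed.

End Top.

Lemma lc_stab {X : Type} (C : nat -> X -> Prop) (A : X -> Prop) x :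
  (A x -> exists N, forall m, (N <= m)%nat -> C m x) ->
  (~ A x -> exists N, forall m, (N <= m)%nat -> ~ C m x) ->
  exists K, forall k, (K <= k)%nat -> ~ ((C k x /\ ~ C (S k) x) \/ (~ C k x /\ C (S k) x)).
Proof.
  intros Ha Hb. destruct (classic (A x)) as [An|An].
  - destruct (Ha An) as [N HN]. exists N. intros k Hk. assert (C (S k) x) by (apply HN; lia).
    specialize (HN k Hk). tauto.
  - destruct (Hb An) as [N HN]. exists N. intros k Hk. assert (~ C (S k) x) by (apply HN; lia).
    specialize (HN k Hk). tauto.
Qed.

Lemma const_from {X : Type} (C : nat -> X -> Prop) x a :
  (forall m, (a <= m)%nat -> ~ ((C m x /\ ~ C (S m) x) \/ (~ C m x /\ C (S m) x))) ->
  forall j, (a <= j)%nat -> (C j x <-> C a x).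
Proof.
  intros H j Hj. replace j with (a + (j - a))%nat by lia. generalize (j - a)%nat as t.
  induction t. rewrite Nat.add_0_r; tauto.
  rewrite Nat.add_succ_r. specialize (H (a + t)%nat ltac:(lia)). tauto.
Qed.

Section Main.
Context {X : Type} (TX : (X -> Prop) -> Prop) (HT : is_topology TX) (Hcl : open_countable_union_clopen TX).

Lemma borel_lc : alpha1 (pw_sub_open (fun f => continuous_map TX R_open f)) ->
  forall A, borel TX A -> lc TX A.
Proof.
  intros H1 A HA. apply HA; [apply lc_sigma; auto|].
  intros U HU. destruct (Hcl U HU) as [C [HC Hiff]].
  apply (pred_ext _ (fun x => exists n, C n x)); [intros x; rewrite Hiff; tauto|].
  destruct (lc_sigma TX HT H1) as [_ [_ Hu]]. apply Hu. intros n. apply lc_clopen, HC.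
Qed.

Lemma a1Cp_bounded : alpha1 (pw_sub_open (fun f => continuous_map TX R_open f)) -> borel_images_bounded TX.
Proof.
  intros H1 Psi HPsi.
  set (Us := fun n k x => (k < Psi x n)%nat).
  assert (HUs : forall p : nat * nat, lc TX (Us (fst p) (snd p))).
  { intros [n k]. apply borel_lc; auto. simpl. apply (baire_pre TX Psi (fun g => (k < g n)%nat)); auto.
    intros f Hf. exists (S n). intros g Hg. rewrite Hg; auto. }
  destruct (ClassicalEpsilon.choice _ HUs) as [C HC].
  set (D1 := fun p m x => (C (of_nat p) m x /\ ~ C (of_nat p) (S m) x) \/ (~ C (of_nat p) m x /\ C (of_nat p) (S m) x)).
  destruct (lemmaG TX HT H1 D1) as [t Ht].
  { intros p m. apply clopen_symdiff; auto; apply HC. }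
  { intros p x. destruct (HC (of_nat p)) as [_ Hx]. destruct (Hx x) as [Ha Hb]. eapply lc_stab; eauto. }
  set (V := fun n k => C (n, k) (t (to_nat (n, k)))).
  assert (VU : forall x, exists P0, forall n k, (P0 <= to_nat (n, k))%nat -> (V n k x <-> Us n k x)).
  { intros x. destruct (Ht x) as [P0 HP0]. exists P0. intros n k Hp.
    assert (Hc : forall j, (t (to_nat (n, k)) <= j)%nat -> (C (n, k) j x <-> C (n, k) (t (to_nat (n, k))) x)).
    { apply const_from. intros m Hm. specialize (HP0 (to_nat (n, k)) m Hp Hm). unfold D1 in HP0.
      rewrite cancel_of_to in HP0. auto. }
    destruct (HC (n, k)) as [_ Hx]. destruct (Hx x) as [Ha Hb]. simpl in Ha, Hb. unfold V.
    destruct (classic (Us n k x)) as [Un|Un].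
    - destruct (Ha Un) as [N HN]. split; auto. intros _.
      apply (Hc (Nat.max N (t (to_nat (n, k))))); [lia|]. apply HN; lia.
    - destruct (Hb Un) as [N HN]. split; [|tauto]. intros Hv. exfalso.
      apply (HN (Nat.max N (t (to_nat (n, k))))); [lia|]. apply Hc; auto; lia. }
  destruct (lemmaG TX HT H1 V) as [h Hh].
  { intros n k. apply HC. }
  { intros n x. destruct (VU x) as [P0 HP0]. exists (Nat.max P0 (S (Psi x n))). intros k Hk Hv.
    apply HP0 in Hv; [unfold Us in Hv; lia|]. pose proof (to_nat_non_decreasing n k). lia. }
  exists (fun n => Nat.max (h n) n). intros f [x <-].
  destruct (Hh x) as [N HN]. destruct (VU x) as [P0 HP0]. exists (Nat.max N P0). intros n Hn.
  assert (Hnv : ~ V n (Nat.max (h n) n) x) by (apply HN; lia).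
  assert (Hnu : ~ Us n (Nat.max (h n) n) x).
  { intros Hu. apply Hnv. apply HP0; auto. pose proof (to_nat_non_decreasing n (Nat.max (h n) n)). lia. }
  unfold Us in Hnu. lia.
Qed.

Lemma a4Bp_bounded : alpha4 (pw_sub_open (fun f => borel_measurable TX R_open f)) -> borel_images_bounded TX.
Proof.
  intros H4 Psi HPsi.
  destruct (classic (inhabited X)) as [[x0]|Hne].
  2: { exists (fun _ => 0%nat). intros f [x _]. exfalso. apply Hne. constructor; auto. }
  set (P := fun f => borel_measurable TX R_open f).
  assert (P0 : P (fun _ => 0)) by (intros V _; apply borel_const).
  set (W := fun n k x => exists i, (i <= n)%nat /\ (k <= Psi x i)%nat).
  assert (HWb : forall n k, borel TX (W n k)).
  { intros n k. apply (baire_pre TX Psi (fun g => exists i, (i <= n)%nat /\ (k <= g i)%nat)); auto.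
    intros f Hf. exists (S n). intros g Hg. destruct Hf as [i [Hi Hk]]. exists i. rewrite Hg; auto; lia. }
  assert (HW : forall n k, P (indf (W n k) (cc n k))).
  { intros n k V _. apply ind_meas; auto using borel_true, borel_false, borel_compl. }
  destruct (H4 (Fz P P0) (fun n z => exists k, FF P W HW n k = z)) as [B [Hc HB]].
  { intros n. apply FF_conv; auto. intros x.
    destruct (nat_uniform (S n) (fun i m => (Psi x i < m)%nat)) as [K HK].
    { intros i _. exists (S (Psi x i)). intros; lia. }
    exists K. intros k Hk [i [Hi Hik]]. assert (Hi2 : (i < S n)%nat) by lia. specialize (HK i Hi2 k Hk). cbv beta in HK. lia. }
  assert (Hch : forall m, exists nk : nat * nat, (m <= fst nk)%nat /\ B (FF P W HW (fst nk) (snd nk))).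
  { intros m. destruct (HB m) as [n [Hn [z [Bz [k <-]]]]]. exists (n, k). simpl; auto. }
  destruct (ClassicalEpsilon.choice _ Hch) as [phi Hphi].
  exists (fun m => snd (phi m)). intros f [x <-].
  destruct (FF_bad P x0 P0 W HW B Hc x) as [Mb HMb].
  exists Mb. intros m Hm. destruct (Hphi m) as [H1 H2].
  destruct (phi m) as [n k] eqn:E. rewrite ?E in H1, H2. cbn [fst snd] in *.
  destruct (le_lt_dec k (Psi x m)) as [Hle|Hlt]; [|lia].
  exfalso. specialize (HMb n k H2 (ex_intro _ m (conj H1 Hle))).
  pose proof (to_nat_non_decreasing n k). lia.
Qed.

End Main.

Theorem mainTheorem9 (X : Type) (TX : (X -> Prop) -> Prop)
  (HT : is_topology TX) (Hcl : open_countable_union_clopen TX) :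
  (borel_images_bounded TX <-> alpha1 (Cp_open TX)) /\
  (borel_images_bounded TX <-> alpha1 (Bp_open TX)) /\
  (borel_images_bounded TX <-> alpha2 (Bp_open TX)) /\
  (borel_images_bounded TX <-> alpha3 (Bp_open TX)) /\
  (borel_images_bounded TX <-> alpha4 (Bp_open TX)).
Proof.
  assert (HPc : forall f, continuous_map TX R_open f -> borel_measurable TX R_open f).
  { intros f Hf V HV. apply borel_open, Hf, HV. }
  assert (F1 : borel_images_bounded TX -> alpha1 (Bp_open TX)).
  { apply (bounded_alpha1 TX). auto. }
  assert (B4 : alpha4 (Bp_open TX) -> borel_images_bounded TX) by apply (a4Bp_bounded TX).
  split; [|split; [|split; [|split]]]; split; intros H.
  - apply (bounded_alpha1 TX); auto.
  - apply (a1Cp_bounded TX HT Hcl); auto.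
  - auto.
  - apply B4, a3_a4, a1_a3; auto.
  - apply a1_a2; auto.
  - apply B4, a2_a4; auto.
  - apply a1_a3; auto.
  - apply B4, a3_a4; auto.
  - apply a3_a4, a1_a3; auto.
  - auto.
Qed.
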